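(* Let $I,S:\mathbb{R}\to\mathbb{R}$ be $2\pi$-periodic Lipschitz functions with $I(\theta)\ge\rho$ for all $\theta$, for some $\rho>0$, and $\min_{[-\pi,\pi]}S<0<\max_{[-\pi,\pi]}S$. Let $(\theta_i(t))$ solve $\dot\theta_i=\omega_i+\frac{\kappa}{N}\sum_{j=1}^NI(\theta_j)S(\theta_i)$, $\theta_i(0)=\theta_i^0$. Fix $\mathcal B\subset\{1,\dots,N\}$ and let $\|\Omega_{\mathcal B}\|_\infty=\max_{i\in\mathcal B}|\omega_i|$. If \[ \kappa>\frac{\|\Omega_{\mathcal B}\|_\infty}{\rho\min\{-\min S,\max S\}}, \] then $\sup_{t\ge0}\theta_i(t)-\inf_{t\ge0}\theta_i(t)<2\pi$ for all $i\in\mathcal B$. *)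

(* Defs.v *)
From Stdlib Require Import Reals List.
From Coquelicot Require Import Coquelicot.
Import ListNotations.
Open Scope R_scope.

Definition periodic_2pi (f : R -> R) : Prop := forall x, f (x + 2 * PI) = f x.

Definition lipschitz (f : R -> R) : Prop :=
  exists L : R, forall x y, Rabs (f x - f y) <= L * Rabs (x - y).

Definition sumN (N : nat) (f : nat -> R) : R :=
  fold_right Rplus 0 (map f (seq 0 N)).

(* ||Omega_B||_inf = max_{i in B} |omega_i|, B a subset of {0,..,N-1}
   given by a boolean predicate (0 if B is empty). *)
Definition OmegaB_norm (N : nat) (B : nat -> bool) (omega : nat -> R) : R :=
  fold_right Rmax 0 (map (fun i => Rabs (omega i)) (filter B (seq 0 N))).

Definition is_min_on (f : R -> R) (a b m : R) : Prop :=
  (exists x, a <= x <= b /\ f x = m) /\ (forall x, a <= x <= b -> m <= f x).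
Definition is_max_on (f : R -> R) (a b M : R) : Prop :=
  (exists x, a <= x <= b /\ f x = M) /\ (forall x, a <= x <= b -> f x <= M).

Definition is_lower_bound (E : R -> Prop) (m : R) : Prop := forall x, E x -> m <= x.
Definition is_glb (E : R -> Prop) (m : R) : Prop :=
  is_lower_bound E m /\ forall b, is_lower_bound E b -> b <= m.

(* Main.v *)
Require Import Defs.
From Stdlib Require Import Reals List Lra Lia Classical.
From Coquelicot Require Import Coquelicot.
Open Scope R_scope.

Lemma deriv_neg f x l : is_derive f x l -> l < 0 ->
  exists d, 0 < d /\ forall h, 0 < h < d -> f (x + h) < f x.
Proof.
  intros Hd Hl. apply is_derive_Reals in Hd.
  destruct (Hd (- l / 2)) as [d Hd']; [lra|].
  exists (pos d); split; [apply cond_pos|].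
  intros h Hh.
  assert (Hq := Hd' h ltac:(lra) ltac:(rewrite Rabs_pos_eq; lra)).
  apply Rabs_def2 in Hq.
  assert (Hq2 : (f (x + h) - f x) / h < 0) by lra.
  assert (E : f (x + h) - f x = ((f (x + h) - f x) / h) * h) by (field; lra).
  nra.
Qed.

Lemma deriv_pos f x l : is_derive f x l -> 0 < l ->
  exists d, 0 < d /\ forall h, 0 < h < d -> f x < f (x + h).
Proof.
  intros Hd Hl. apply is_derive_Reals in Hd.
  destruct (Hd (l / 2)) as [d Hd']; [lra|].
  exists (pos d); split; [apply cond_pos|].
  intros h Hh.
  assert (Hq := Hd' h ltac:(lra) ltac:(rewrite Rabs_pos_eq; lra)).
  apply Rabs_def2 in Hq.
  assert (Hq2 : 0 < (f (x + h) - f x) / h) by lra.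
  assert (E : f (x + h) - f x = ((f (x + h) - f x) / h) * h) by (field; lra).
  nra.
Qed.

Lemma deriv_cont f x l : is_derive f x l ->
  forall e, 0 < e -> exists d, 0 < d /\ forall y, Rabs (y - x) < d -> Rabs (f y - f x) < e.
Proof.
  intros Hd e He.
  assert (C : continuous f x) by (apply ex_derive_continuous; exists l; exact Hd).
  destruct (proj1 (filterlim_locally f (f x)) C (mkposreal e He)) as [d Hd'].
  exists (pos d); split; [apply cond_pos|]. intros y Hy. exact (Hd' y Hy).
Qed.

Lemma rcont0 f : filterlim f (at_right 0) (locally (f 0)) ->
  forall e, 0 < e -> exists d, 0 < d /\ forall y, 0 <= y -> y < d -> Rabs (f y - f 0) < e.
Proof.
  intros C e He.
  destruct (proj1 (filterlim_locally f (f 0)) C (mkposreal e He)) as [d Hd'].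
  exists (pos d); split; [apply cond_pos|]. intros y Hy0 Hy.
  destruct (Req_dec y 0) as [->|Hne].
  - rewrite Rminus_diag, Rabs_R0; lra.
  - apply (Hd' y). change (Rabs (y - 0) < d). rewrite Rminus_0_r, Rabs_pos_eq; lra. lra.
Qed.

Lemma no_up (f : R -> R) (c : R)
  (Hc : forall t, 0 <= t -> forall e, 0 < e -> exists d, 0 < d /\
          forall y, 0 <= y -> Rabs (y - t) < d -> Rabs (f y - f t) < e)
  (Hd : forall t, 0 < t -> f t = c -> exists d, 0 < d /\ forall h, 0 < h < d -> f (t + h) < f t) :
  forall s t, 0 <= s -> s <= t -> f s < c -> f t <= c.
Proof.
  intros s t Hs Hst Hfs.
  destruct (Rle_or_lt (f t) c) as [|Hft]; [assumption|exfalso].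
  set (E := fun x => s <= x <= t /\ f x <= c).
  destruct (completeness E) as [u [Hub Hlub]].
  { exists t. intros x [Hx _]. lra. }
  { exists s. split; lra. }
  assert (Hsu : s <= u) by (apply Hub; split; lra).
  assert (Hut : u <= t) by (apply Hlub; intros x [Hx _]; lra).
  assert (Hfu1 : f u <= c).
  { destruct (Rle_or_lt (f u) c) as [|Hlt]; [assumption|exfalso].
    destruct (Hc u ltac:(lra) (f u - c) ltac:(lra)) as [d [Hd0 Hdd]].
    assert (Hb : ~ is_upper_bound E (u - d)).
    { intros Hb. specialize (Hlub _ Hb). lra. }
    apply Hb. intros x [Hx Hfx].
    destruct (Rle_or_lt x (u - d)) as [|Hlt2]; [assumption|exfalso].
    assert (x <= u) by (apply Hub; split; assumption).
    assert (Hq := Hdd x ltac:(lra) ltac:(rewrite Rabs_left1; lra)).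
    apply Rabs_def2 in Hq. lra. }
  assert (Hu_t : u < t) by (destruct (Req_dec u t); [subst; lra| lra]).
  assert (Hfu2 : f u = c).
  { destruct (Req_dec (f u) c) as [|Hne]; [assumption|exfalso].
    destruct (Hc u ltac:(lra) (c - f u) ltac:(lra)) as [d [Hd0 Hdd]].
    set (y := Rmin (u + d / 2) t).
    assert (Hy1 : u < y) by (unfold y; apply Rmin_glb_lt; lra).
    assert (Hy2 : y <= u + d / 2) by apply Rmin_l.
    assert (Hy3 : y <= t) by apply Rmin_r.
    assert (Hq := Hdd y ltac:(lra) ltac:(rewrite Rabs_pos_eq; lra)).
    apply Rabs_def2 in Hq.
    assert (y <= u) by (apply Hub; split; [lra|lra]).
    lra. }
  assert (Hsu' : s < u) by (destruct (Req_dec s u); [subst; lra|lra]).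
  destruct (Hd u ltac:(lra) Hfu2) as [d [Hd0 Hdd]].
  set (h := Rmin (d / 2) (t - u)).
  assert (Hh1 : 0 < h) by (unfold h; apply Rmin_glb_lt; lra).
  assert (Hh2 : h <= d / 2) by apply Rmin_l.
  assert (Hh3 : h <= t - u) by apply Rmin_r.
  assert (Hq := Hdd h ltac:(lra)).
  assert (u + h <= u) by (apply Hub; split; lra).
  lra.
Qed.
Lemma per_Z (S : R -> R) : periodic_2pi S -> forall k x, S (x + 2 * PI * IZR k) = S x.
Proof.
  intros HS k. induction k using Z.peano_ind; intros x.
  - rewrite Rmult_0_r, Rplus_0_r; reflexivity.
  - rewrite succ_IZR. replace (x + 2 * PI * (IZR k + 1)) with ((x + 2 * PI * IZR k) + 2 * PI) by ring.
    rewrite HS. apply IHk.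
  - rewrite <- Z.sub_1_r, minus_IZR. replace (x + 2 * PI * (IZR k - 1)) with (x - 2 * PI + 2 * PI * IZR k) by ring.
    rewrite IHk. rewrite <- (HS (x - 2 * PI)). f_equal; ring.
Qed.

Lemma exists_in (S : R -> R) (Q : R -> Prop) p eta : periodic_2pi S -> 0 < eta ->
  (forall x, Rabs (x - p) <= eta -> Q (S x)) ->
  forall y, exists c, y < c < y + 2 * PI /\ Q (S c).
Proof.
  intros HS He HQ y. pose proof PI_RGT_0 as Hpi.
  set (k := up ((y - p) / (2 * PI))).
  destruct (archimed ((y - p) / (2 * PI))) as [A1 A2]. fold k in A1, A2.
  assert (E : (y - p) / (2 * PI) * (2 * PI) = y - p) by (field; lra).
  assert (B1 : 2 * PI * IZR k > y - p) by nra.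
  assert (B2 : 2 * PI * IZR k <= y - p + 2 * PI) by nra.
  destruct (Rlt_or_le (p + 2 * PI * IZR k) (y + 2 * PI)) as [Hlt|Hge].
  - exists (p + 2 * PI * IZR k). split; [lra|].
    rewrite per_Z by assumption. apply HQ. rewrite Rminus_diag, Rabs_R0; lra.
  - set (e := Rmin eta PI).
    assert (e1 : 0 < e) by (unfold e; apply Rmin_glb_lt; lra).
    assert (e2 : e <= eta) by apply Rmin_l.
    assert (e3 : e <= PI) by apply Rmin_r.
    exists ((p - e) + 2 * PI * IZR k). split; [lra|].
    rewrite per_Z by assumption. apply HQ.
    replace (p - e - p) with (- e) by ring. rewrite Rabs_Ropp, Rabs_pos_eq; lra.
Qed.

Lemma nbhd (S : R -> R) : lipschitz S -> forall p G, 0 < G ->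
  exists eta, 0 < eta /\ forall x, Rabs (x - p) <= eta -> Rabs (S x - S p) < G.
Proof.
  intros [L HL] p G HG.
  pose proof (Rabs_pos L) as HL0.
  exists (G / (Rabs L + 1)). split.
  - apply Rdiv_lt_0_compat; lra.
  - intros x Hx. eapply Rle_lt_trans; [apply HL|].
    assert (L * Rabs (x - p) <= Rabs L * Rabs (x - p)) by
      (apply Rmult_le_compat_r; [apply Rabs_pos| apply RRle_abs]).
    assert (Rabs L * Rabs (x - p) <= Rabs L * (G / (Rabs L + 1))) by
      (apply Rmult_le_compat_l; assumption).
    assert (Rabs L * (G / (Rabs L + 1)) < G).
    { apply (Rmult_lt_reg_r (Rabs L + 1)); [lra|].
      replace (Rabs L * (G / (Rabs L + 1)) * (Rabs L + 1)) with (Rabs L * G) by (field; lra).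
      nra. }
    lra.
Qed.

Lemma sum_ge (f : nat -> R) rho : (forall j, rho <= f j) ->
  forall l, INR (length l) * rho <= fold_right Rplus 0 (map f l).
Proof.
  intros Hf l. induction l as [|a l IH]; cbn [length map fold_right].
  - simpl; lra.
  - rewrite S_INR. specialize (Hf a). lra.
Qed.

Lemma max_ge l x : In x l -> x <= fold_right Rmax 0 l.
Proof.
  induction l as [|a l IH]; simpl; [tauto|].
  intros [->|H]; [apply Rmax_l|]. eapply Rle_trans; [apply IH; exact H|apply Rmax_r].
Qed.

Lemma max_0 l : 0 <= fold_right Rmax 0 l.
Proof. induction l; simpl; [lra|]. eapply Rle_trans; [exact IHl|apply Rmax_r]. Qed.

Theorem proposition4p2
  (I S : R -> R) (rho Smin Smax kappa : R) (N : nat)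
  (omega : nat -> R) (theta : nat -> R -> R) (B : nat -> bool)
  (HIper : periodic_2pi I) (HSper : periodic_2pi S)
  (HIlip : lipschitz I) (HSlip : lipschitz S)
  (Hrho : 0 < rho) (HIrho : forall x, rho <= I x)
  (HSmin : is_min_on S (- PI) PI Smin) (HSmax : is_max_on S (- PI) PI Smax)
  (HSmin0 : Smin < 0) (HSmax0 : 0 < Smax)
  (HN : (0 < N)%nat)
  (HBsub : forall i, B i = true -> (i < N)%nat)
  (Hcont0 : forall i, (i < N)%nat ->
     filterlim (theta i) (at_right 0) (locally (theta i 0)))
  (Hode : forall i t, (i < N)%nat -> 0 < t ->
     is_derive (theta i) t
       (omega i + kappa / INR N * sumN N (fun j => I (theta j t)) * S (theta i t)))
  (Hkappa : kappa > OmegaB_norm N B omega / (rho * Rmin (- Smin) Smax)) :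
  forall i, B i = true ->
    exists M m : R,
      is_lub (fun x => exists t, 0 <= t /\ x = theta i t) M /\
      is_glb (fun x => exists t, 0 <= t /\ x = theta i t) m /\
      M - m < 2 * PI.
Proof.
  intros i Hi. pose proof (HBsub i Hi) as HiN.
  set (W := OmegaB_norm N B omega) in *.
  assert (HW0 : 0 <= W) by apply max_0.
  assert (Hwi : Rabs (omega i) <= W).
  { apply max_ge. apply in_map_iff. exists i. split; [reflexivity|].
    apply filter_In. split; [apply in_seq; lia|exact Hi]. }
  set (r := Rmin (- Smin) Smax) in *.
  assert (Hr : 0 < r) by (unfold r; apply Rmin_glb_lt; lra).
  assert (Hr1 : r <= - Smin) by apply Rmin_l.
  assert (Hr2 : r <= Smax) by apply Rmin_r.
  assert (Hrr : 0 < rho * r) by nra.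
  assert (Hkr : kappa * (rho * r) > W).
  { assert (E : W = W / (rho * r) * (rho * r)) by (field; lra).
    rewrite E. apply Rmult_lt_compat_r; lra. }
  assert (Hk0 : 0 < kappa).
  { assert (0 <= W / (rho * r)) by (apply Rdiv_le_0_compat; lra). lra. }
  set (K := kappa * rho).
  assert (HK0 : 0 < K) by (unfold K; nra).
  assert (HK1 : K * Smax > Rabs (omega i)) by (unfold K; nra).
  assert (HK2 : K * (- Smin) > Rabs (omega i)) by (unfold K; nra).
  assert (HNpos : 0 < INR N) by (apply lt_0_INR; lia).
  assert (HA : forall t, K <= kappa / INR N * sumN N (fun j => I (theta j t))).
  { intros t. unfold sumN.
    pose proof (sum_ge (fun j => I (theta j t)) rho (fun j => HIrho _) (seq 0 N)) as Hs.
    rewrite length_seq in Hs.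
    assert (E : K = kappa / INR N * (INR N * rho)) by (unfold K; field; lra).
    rewrite E. apply Rmult_le_compat_l; [|exact Hs].
    apply Rdiv_le_0_compat; lra. }
  set (f := theta i).
  set (w := Rabs (omega i)) in *.
  assert (Hw0 : 0 <= w) by apply Rabs_pos.
  assert (Hc : forall t, 0 <= t -> forall e, 0 < e -> exists d, 0 < d /\
          forall y, 0 <= y -> Rabs (y - t) < d -> Rabs (f y - f t) < e).
  { intros t Ht e He. destruct (Req_dec t 0) as [->|Hne].
    - destruct (rcont0 f (Hcont0 i HiN) e He) as [d [Hd Hdd]].
      exists d. split; [exact Hd|]. intros y Hy Hyd. apply Hdd; [exact Hy|].
      rewrite Rminus_0_r, Rabs_pos_eq in Hyd; lra.
    - destruct (deriv_cont f t _ (Hode i t HiN ltac:(lra)) e He) as [d [Hd Hdd]].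
      exists d. split; [exact Hd|]. intros y _ Hyd. apply Hdd; exact Hyd. }
  assert (Hup : forall c, K * S c + w < 0 -> forall s t, 0 <= s -> s <= t -> f s < c -> f t <= c).
  { intros c Hcc. apply no_up; [exact Hc|].
    intros t Ht Hft. eapply deriv_neg; [apply (Hode i t HiN Ht)|].
    fold f. rewrite Hft.
    pose proof (HA t). assert (S c < 0).
    { destruct (Rlt_or_le (S c) 0); [assumption|]. assert (0 <= K * S c) by (apply Rmult_le_pos; lra). lra. }
    assert (omega i <= w) by apply RRle_abs.
    nra. }
  assert (Hdown : forall c, K * S c - w > 0 -> forall s t, 0 <= s -> s <= t -> c < f s -> c <= f t).
  { intros c Hcc s t Hs Hst Hfs.
    assert (- f t <= - c); [|lra].
    apply (no_up (fun x => - f x) (- c)) with s; try assumption; [| |lra].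
    - intros t0 Ht0 e He. destruct (Hc t0 Ht0 e He) as [d [Hd Hdd]].
      exists d. split; [exact Hd|]. intros y Hy Hyd.
      replace (- f y - - f t0) with (- (f y - f t0)) by ring. rewrite Rabs_Ropp. auto.
    - intros t0 Ht0 Hft.
      assert (Hft' : f t0 = c) by lra.
      destruct (deriv_pos f t0 _ (Hode i t0 HiN Ht0)) as [d [Hd Hdd]].
      + fold f. rewrite Hft'.
        pose proof (HA t0). assert (0 < S c).
        { destruct (Rlt_or_le 0 (S c)); [assumption|]. assert (K * S c <= 0) by (apply Rmult_le_0_l; lra). lra. }
        assert (- w <= omega i) by (unfold w; pose proof (Rabs_pos (omega i)); 
          destruct (Rcase_abs (omega i)); [rewrite Rabs_left|rewrite Rabs_right]; lra).
        nra.
      + exists d. split; [exact Hd|]. intros h Hh. specialize (Hdd h Hh). lra. }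
  destruct HSmin as [[p1 [Hp1 Sp1]] _].
  destruct HSmax as [[p2 [Hp2 Sp2]] _].
  destruct (nbhd S HSlip p1 ((- (K * Smin + w)) / K) ltac:(apply Rdiv_lt_0_compat; lra))
    as [e1 [He1 Hn1]].
  destruct (nbhd S HSlip p2 ((K * Smax - w) / K) ltac:(apply Rdiv_lt_0_compat; lra))
    as [e2 [He2 Hn2]].
  assert (EU : forall y, exists c, y < c < y + 2 * PI /\ K * S c + w < 0).
  { apply (exists_in S (fun v => K * v + w < 0) p1 e1 HSper He1).
    intros x Hx. specialize (Hn1 x Hx). rewrite Sp1 in Hn1. apply Rabs_def2 in Hn1.
    destruct Hn1 as [Hn1 _].
    assert (E : K * ((- (K * Smin + w)) / K) = - (K * Smin + w)) by (field; lra).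
    assert (K * (S x - Smin) < K * ((- (K * Smin + w)) / K)) by (apply Rmult_lt_compat_l; lra).
    lra. }
  assert (EV : forall y, exists c, y < c < y + 2 * PI /\ K * S c - w > 0).
  { apply (exists_in S (fun v => K * v - w > 0) p2 e2 HSper He2).
    intros x Hx. specialize (Hn2 x Hx). rewrite Sp2 in Hn2. apply Rabs_def2 in Hn2.
    destruct Hn2 as [_ Hn2].
    assert (E : K * ((K * Smax - w) / K) = K * Smax - w) by (field; lra).
    assert (K * (- ((K * Smax - w) / K)) < K * (S x - Smax)) by (apply Rmult_lt_compat_l; lra).
    lra. }
  destruct (EU (f 0)) as [cU [HcU1 HcU2]].
  destruct (EV (f 0 - 2 * PI)) as [cV [HcV1 HcV2]].
  assert (Hub : forall t, 0 <= t -> f t <= cU) by (intros t Ht; apply (Hup cU HcU2 0 t); lra).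
  assert (Hlb : forall t, 0 <= t -> cV <= f t) by (intros t Ht; apply (Hdown cV HcV2 0 t); lra).
  set (E := fun x => exists t, 0 <= t /\ x = theta i t).
  destruct (completeness E) as [M HM].
  { exists cU. intros x [t [Ht ->]]. apply Hub; exact Ht. }
  { exists (f 0). exists 0. split; [lra|reflexivity]. }
  destruct (completeness (fun x => E (- x))) as [m' Hm'].
  { exists (- cV). intros x [t [Ht Hx]]. assert (cV <= f t) by (apply Hlb; exact Ht).
    unfold f in *. lra. }
  { exists (- f 0). exists 0. split; [lra|unfold f; ring]. }
  assert (Hm : is_glb E (- m')).
  { destruct Hm' as [Hm1 Hm2]. split.
    - intros x Hx. assert (- x <= m'); [apply Hm1; rewrite Ropp_involutive; exact Hx|lra].
    - intros b Hb. assert (m' <= - b); [|lra]. apply Hm2. intros x Hx.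
      specialize (Hb _ Hx). lra. }
  exists M, (- m'). split; [exact HM|]. split; [exact Hm|].
  set (m := - m') in *.
  destruct (Rlt_or_le (M - m) (2 * PI)) as [Hlt|Hge]; [exact Hlt|exfalso].
  destruct (EU m) as [c [Hc1 Hc2]].
  destruct (EV m) as [c' [Hc1' Hc2']].
  set (eps := Rmin (Rmin (c - m) (M - c)) (Rmin (c' - m) (M - c'))).
  assert (Heps : 0 < eps) by (unfold eps; repeat apply Rmin_glb_lt; lra).
  assert (He1' : eps <= c - m) by (unfold eps; eapply Rle_trans; [apply Rmin_l|apply Rmin_l]).
  assert (He2' : eps <= M - c) by (unfold eps; eapply Rle_trans; [apply Rmin_l|apply Rmin_r]).
  assert (He3' : eps <= c' - m) by (unfold eps; eapply Rle_trans; [apply Rmin_r|apply Rmin_l]).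
  assert (He4' : eps <= M - c') by (unfold eps; eapply Rle_trans; [apply Rmin_r|apply Rmin_r]).
  assert (T1 : exists t1, 0 <= t1 /\ f t1 < m + eps).
  { apply NNPP. intros Hn. destruct Hm as [_ Hm2].
    assert (m + eps <= m); [|lra]. apply Hm2. intros x [t [Ht ->]].
    destruct (Rlt_or_le (theta i t) (m + eps)) as [Hl|Hl]; [|exact Hl].
    exfalso. apply Hn. exists t. split; assumption. }
  assert (T2 : exists t2, 0 <= t2 /\ M - eps < f t2).
  { apply NNPP. intros Hn. destruct HM as [_ HM2].
    assert (M <= M - eps); [|lra]. apply HM2. intros x [t [Ht ->]].
    destruct (Rlt_or_le (M - eps) (theta i t)) as [Hl|Hl]; [|exact Hl].
    exfalso. apply Hn. exists t. split; assumption. }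
  destruct T1 as [t1 [Ht1 Hf1]]. destruct T2 as [t2 [Ht2 Hf2]].
  destruct (Rle_or_lt t1 t2) as [H12|H21].
  - assert (f t2 <= c) by (apply (Hup c Hc2 t1 t2); lra). lra.
  - assert (c' <= f t1) by (apply (Hdown c' Hc2' t2 t1); lra). lra.
Qed.
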